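(* A strongly regular graph with parameters $(76,30,8,14)$ does not contain $K_5$ (complete graph on $5$ vertices) as a subgraph.
   Context: A graph is strongly regular with parameters $(v,k,\lambda,\mu)$ if it has $v$ vertices, is $k$-regular, adjacent vertices have exactly $\lambda$ common neighbours and distinct non-adjacent vertices have exactly $\mu$ common neighbours. *)

(* Defs.v *)
From mathcomp Require Import all_boot.
Set Implicit Arguments. Unset Strict Implicit. Unset Printing Implicit Defensive.

Definition simple_graph (T : finType) (e : rel T) : Prop :=
  symmetric e /\ irreflexive e.

Definition srg (T : finType) (e : rel T) (v k lam mu : nat) : Prop :=
  [/\ simple_graph e,
      #|T| = v,
      (forall x : T, #|[set y | e x y]| = k),
      (forall x y : T, e x y -> #|[set z | e x z && e y z]| = lam)
    & (forall x y : T, x != y -> ~~ e x y -> #|[set z | e x z && e y z]| = mu)].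

Definition contains_clique (T : finType) (e : rel T) (n : nat) : Prop :=
  exists f : 'I_n -> T, injective f /\ (forall i j : 'I_n, i != j -> e (f i) (f j)).

(* Main.v *)
Require Import Defs.
From mathcomp Require Import all_boot.
From mathcomp Require Import zify.

Lemma card_sum (T : finType) (P : pred T) :
  #|[set y | P y]| = \sum_y (P y : nat).
Proof.
rewrite -sum1_card big_mkcond /=; apply: eq_bigr => y _.
by rewrite inE; case: (P y).
Qed.

Lemma sum_neq5 (j : 'I_5) : \sum_(i < 5) (i != j : nat) = 4.
Proof.
case: j => [[|[|[|[|[|m]]]]] Hj] //;
  by rewrite !big_ord_recr big_ord0.
Qed.

Lemma sum_sq5 (F : 'I_5 -> 'I_5 -> nat) :
  (forall i j, F i j = if i == j then 30 else 8) ->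
  \sum_(i < 5) \sum_(j < 5) F i j = 310.
Proof.
move=> HF; under eq_bigr => i _ do under eq_bigr => j _ do rewrite HF.
by rewrite !big_ord_recr !big_ord0.
Qed.

Theorem mainTheorem8 (T : finType) (e : rel T) :
  srg e 76 30 8 14 -> ~ contains_clique e 5.
Proof.
case=> [[esym eirr] cardT deg lam _] [f [finj fcl]].
pose D x := \sum_(i < 5) (e x (f i) : nat).
have S1 : \sum_x D x = 150.
  rewrite /D exchange_big /=.
  under eq_bigr => i _ do (under eq_bigr => x _ do rewrite esym; rewrite -card_sum deg).
  by rewrite sum_nat_const card_ord.
have S2 : \sum_x D x * D x = 310.
  rewrite /D.
  under eq_bigr => x _ do rewrite big_distrlr /=.
  rewrite exchange_big /=.
  under eq_bigr => i _ do rewrite exchange_big /=.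
  apply: sum_sq5 => i j.
  under eq_bigr => x _ do rewrite mulnb esym [e x (f j)]esym.
  case: eqP => [->|/eqP Hij].
    by under eq_bigr => z _ do rewrite andbb; rewrite -card_sum deg.
  rewrite -card_sum.
  by rewrite lam // fcl // eq_sym.
have Df : forall j, D (f j) = 4.
  move=> j; rewrite /D -[RHS](sum_neq5 j); apply: eq_bigr => i _.
  case: eqP => [->|/eqP Hij]; first by rewrite eirr.
  by rewrite fcl // eq_sym.
pose g x := D x * D x + 2 - 3 * D x.
have Hg : forall x, D x * D x + 2 = 3 * D x + g x.
  move=> x; rewrite /g; set d := D x; have : 3 * d <= d * d + 2 by case: (leqP d 1) => H; nia.
  lia.
have Sc : \sum_(x : T) 2 = 152.
  by rewrite (eq_bigl (fun x => x \in T)) // sum_nat_const cardT.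
have E : \sum_x (D x * D x + 2) = 450 + \sum_x g x.
  by rewrite (eq_bigr _ (fun x _ => Hg x)) big_split /= -big_distrr /= S1.
have G30 : 30 <= \sum_x g x.
  have -> : 30 = \sum_(x in f @: [set: 'I_5]) g x.
    rewrite big_imset /=; last by move=> a b _ _; apply: finj.
    rewrite (eq_bigr (fun _ => 6)); last by move=> i _; rewrite /g Df.
    by rewrite sum_nat_const cardsT card_ord.
  rewrite big_mkcond /=; apply: leq_sum => x _; by case: ifP.
move: E; rewrite big_split /= S2 Sc; lia.
Qed.
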